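(* Fix $I_{ij},I_{jk},I_{ki}\in[0,\infty)$. Define $\rho_E:\mathbb{R}^3_{>0}\to\mathbb{R}^3_{>0}$ by $$\rho_E(r_i,r_j,r_k)=(l_{ij},l_{jk},l_{ki}),$$ where $$l_{ij}=\sqrt{r_i^2+r_j^2+2I_{ij}r_ir_j},\quad l_{jk}=\sqrt{r_j^2+r_k^2+2I_{jk}r_jr_k},\quad l_{ki}=\sqrt{r_k^2+r_i^2+2I_{ki}r_kr_i}.$$ Then $\rho_E$ is a smooth embedding. In particular, for any given positive $l_{ij},l_{jk},l_{ki}$ there is at most one $(r_i,r_j,r_k)\in\mathbb{R}^3_{>0}$ with $\rho_E(r_i,r_j,r_k)=(l_{ij},l_{jk},l_{ki})$. *)

(* Defs.v *)
From Stdlib Require Import Reals.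
Open Scope R_scope.

Definition pos3 (x y z : R) : Prop := 0 < x /\ 0 < y /\ 0 < z.

(* A distance on R^3 (l^1 distance; all norms on R^3 are equivalent). *)
Definition dist3 (x y z x' y' z' : R) : R :=
  Rabs (x - x') + Rabs (y - y') + Rabs (z - z').

Definition continuous_on_pos3 (g : R -> R -> R -> R) : Prop :=
  forall x y z, pos3 x y z ->
  forall eps, 0 < eps -> exists delta, 0 < delta /\
    forall x' y' z', pos3 x' y' z' -> dist3 x' y' z' x y z < delta ->
      Rabs (g x' y' z' - g x y z) < eps.

Definition partials_on_pos3 (g d1 d2 d3 : R -> R -> R -> R) : Prop :=
  forall x y z, pos3 x y z ->
    derivable_pt_lim (fun t => g t y z) x (d1 x y z) /\
    derivable_pt_lim (fun t => g x t z) y (d2 x y z) /\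
    derivable_pt_lim (fun t => g x y t) z (d3 x y z).

Fixpoint Ck_pos3 (k : nat) (g : R -> R -> R -> R) : Prop :=
  match k with
  | O => continuous_on_pos3 g
  | S k' => continuous_on_pos3 g /\
      exists d1 d2 d3, partials_on_pos3 g d1 d2 d3 /\
        Ck_pos3 k' d1 /\ Ck_pos3 k' d2 /\ Ck_pos3 k' d3
  end.

Definition smooth_pos3 (g : R -> R -> R -> R) : Prop := forall k, Ck_pos3 k g.

Definition comp1 (F : R -> R -> R -> R * R * R) : R -> R -> R -> R :=
  fun x y z => fst (fst (F x y z)).
Definition comp2 (F : R -> R -> R -> R * R * R) : R -> R -> R -> R :=
  fun x y z => snd (fst (F x y z)).
Definition comp3 (F : R -> R -> R -> R * R * R) : R -> R -> R -> R :=
  fun x y z => snd (F x y z).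

Definition det3 (a11 a12 a13 a21 a22 a23 a31 a32 a33 : R) : R :=
  a11 * (a22 * a33 - a23 * a32)
  - a12 * (a21 * a33 - a23 * a31)
  + a13 * (a21 * a32 - a22 * a31).

(* Immersion: at each point of R^3_{>0} the differential (Jacobian matrix of
   first partial derivatives of the components) is injective, i.e. (square
   case) has nonzero determinant. *)
Definition immersion_pos3 (F : R -> R -> R -> R * R * R) : Prop :=
  exists a11 a12 a13 a21 a22 a23 a31 a32 a33 : R -> R -> R -> R,
    partials_on_pos3 (comp1 F) a11 a12 a13 /\
    partials_on_pos3 (comp2 F) a21 a22 a23 /\
    partials_on_pos3 (comp3 F) a31 a32 a33 /\
    forall x y z, pos3 x y z ->
      det3 (a11 x y z) (a12 x y z) (a13 x y z)
           (a21 x y z) (a22 x y z) (a23 x y z)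
           (a31 x y z) (a32 x y z) (a33 x y z) <> 0.

Definition injective_pos3 (F : R -> R -> R -> R * R * R) : Prop :=
  forall x y z x' y' z', pos3 x y z -> pos3 x' y' z' ->
    F x y z = F x' y' z' -> x = x' /\ y = y' /\ z = z'.

(* The inverse of F (on its image) is continuous: F is a homeomorphism of
   R^3_{>0} onto its image with the subspace topology (together with the
   continuity of F, which is part of smoothness). *)
Definition inverse_continuous_pos3 (F : R -> R -> R -> R * R * R) : Prop :=
  forall x y z, pos3 x y z ->
  forall eps, 0 < eps -> exists delta, 0 < delta /\
    forall x' y' z', pos3 x' y' z' ->
      dist3 (comp1 F x' y' z') (comp2 F x' y' z') (comp3 F x' y' z')
            (comp1 F x y z) (comp2 F x y z) (comp3 F x y z) < delta ->
      dist3 x' y' z' x y z < eps.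

Definition smooth_embedding_pos3 (F : R -> R -> R -> R * R * R) : Prop :=
  (forall x y z, pos3 x y z -> pos3 (comp1 F x y z) (comp2 F x y z) (comp3 F x y z)) /\
  smooth_pos3 (comp1 F) /\ smooth_pos3 (comp2 F) /\ smooth_pos3 (comp3 F) /\
  immersion_pos3 F /\
  injective_pos3 F /\
  inverse_continuous_pos3 F.

Definition l_edge (I ra rb : R) : R := sqrt (ra ^ 2 + rb ^ 2 + 2 * I * ra * rb).

Definition rhoE (Iij Ijk Iki : R) (ri rj rk : R) : R * R * R :=
  (l_edge Iij ri rj, l_edge Ijk rj rk, l_edge Iki rk ri).

(* Main.v *)
Require Import Defs.
From Stdlib Require Import Reals Lra Lia Psatz FunctionalExtensionality.
Open Scope R_scope.

Inductive ex := Cst (c:R) | Vx | Vy | Vz | Add (a b : ex) | Mul (a b : ex) | Sq (a : ex) | Inv (a : ex).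

Fixpoint eval (e : ex) (x y z : R) : R :=
  match e with
  | Cst c => c | Vx => x | Vy => y | Vz => z
  | Add a b => eval a x y z + eval b x y z
  | Mul a b => eval a x y z * eval b x y z
  | Sq a => sqrt (eval a x y z)
  | Inv a => / eval a x y z
  end.

Fixpoint ok (e : ex) (x y z : R) : Prop :=
  match e with
  | Add a b | Mul a b => ok a x y z /\ ok b x y z
  | Sq a => ok a x y z /\ 0 < eval a x y z
  | Inv a => ok a x y z /\ eval a x y z <> 0
  | _ => True
  end.

Inductive var := V1 | V2 | V3.

Fixpoint d (v : var) (e : ex) : ex :=
  match e with
  | Cst _ => Cst 0
  | Vx => match v with V1 => Cst 1 | _ => Cst 0 end
  | Vy => match v with V2 => Cst 1 | _ => Cst 0 end
  | Vz => match v with V3 => Cst 1 | _ => Cst 0 end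
  | Add a b => Add (d v a) (d v b)
  | Mul a b => Add (Mul (d v a) b) (Mul a (d v b))
  | Sq a => Mul (d v a) (Inv (Mul (Cst 2) (Sq a)))
  | Inv a => Mul (Cst (-1)) (Mul (d v a) (Inv (Mul a a)))
  end.

Lemma ok_d v e x y z : ok e x y z -> ok (d v e) x y z.
Proof.
  induction e; simpl; intros H.
  all: try (destruct v; simpl; auto; fail).
  all: try (destruct H as [H1 H2]; repeat split; auto).
  all: try (apply Rmult_integral_contrapositive; split; [lra|]; apply Rgt_not_eq, sqrt_lt_R0; auto).
  all: try (apply Rmult_integral_contrapositive; auto).
Qed.

Definition evalv v e t x y z :=
  match v with V1 => eval e t y z | V2 => eval e x t z | V3 => eval e x y t end.
Definition pv v (x y z : R) := match v with V1 => x | V2 => y | V3 => z end.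

Lemma evalv_pv v e x y z : evalv v e (pv v x y z) x y z = eval e x y z.
Proof. destruct v; reflexivity. Qed.

Lemma d_correct v e x y z : ok e x y z ->
  derivable_pt_lim (fun t => evalv v e t x y z) (pv v x y z) (eval (d v e) x y z).
Proof.
  induction e; simpl; intros H.
  - replace (fun _ : R => evalv v (Cst c) _ x y z) with (fct_cte c)
      by (extensionality t; destruct v; reflexivity).
    apply derivable_pt_lim_const.
  - destruct v; simpl.
    + apply derivable_pt_lim_id.
    + apply (derivable_pt_lim_const x).
    + apply (derivable_pt_lim_const x).
  - destruct v; simpl.
    + apply (derivable_pt_lim_const y).
    + apply derivable_pt_lim_id.
    + apply (derivable_pt_lim_const y).
  - destruct v; simpl.
    + apply (derivable_pt_lim_const z).
    + apply (derivable_pt_lim_const z).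
    + apply derivable_pt_lim_id.
  - destruct H as [Ha Hb].
    replace (fun t => evalv v (Add e1 e2) t x y z) with
      (plus_fct (fun t => evalv v e1 t x y z) (fun t => evalv v e2 t x y z))
      by (extensionality t; destruct v; reflexivity).
    apply derivable_pt_lim_plus; auto.
  - destruct H as [Ha Hb].
    replace (fun t => evalv v (Mul e1 e2) t x y z) with
      (mult_fct (fun t => evalv v e1 t x y z) (fun t => evalv v e2 t x y z))
      by (extensionality t; destruct v; reflexivity).
    pose proof (derivable_pt_lim_mult _ _ _ _ _ (IHe1 Ha) (IHe2 Hb)) as K.
    cbv beta in K; rewrite !evalv_pv in K. exact K.
  - destruct H as [Ha Hp].
    replace (fun t => evalv v (Sq e) t x y z) with
      (comp sqrt (fun t => evalv v e t x y z))
      by (extensionality t; destruct v; reflexivity).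
    pose proof (derivable_pt_lim_comp _ _ _ _ _ (IHe Ha)
      (derivable_pt_lim_sqrt (evalv v e (pv v x y z) x y z) ltac:(rewrite evalv_pv; exact Hp))) as K.
    cbv beta in K; rewrite !evalv_pv in K. rewrite Rmult_comm. exact K.
  - destruct H as [Ha Hp].
    replace (fun t => evalv v (Inv e) t x y z) with
      (div_fct (fct_cte 1) (fun t => evalv v e t x y z))
      by (extensionality t; destruct v; unfold div_fct, fct_cte; simpl; unfold Rdiv; ring).
    pose proof (derivable_pt_lim_div _ _ _ _ _ (derivable_pt_lim_const 1 (pv v x y z)) (IHe Ha)
       ltac:(cbv beta; rewrite evalv_pv; exact Hp)) as K.
    cbv beta in K; rewrite !evalv_pv in K. unfold fct_cte, Rsqr in K.
    replace (-1 * (eval (d v e) x y z * / (eval e x y z * eval e x y z)))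
      with ((0 * eval e x y z - eval (d v e) x y z * 1) / (eval e x y z * eval e x y z))
      by (field; auto).
    exact K.
Qed.

Definition cont3 (g : R -> R -> R -> R) x y z :=
  forall eps, 0 < eps -> exists delta, 0 < delta /\
    forall x' y' z', dist3 x' y' z' x y z < delta ->
      Rabs (g x' y' z' - g x y z) < eps.

Lemma cont3_const c x y z : cont3 (fun _ _ _ => c) x y z.
Proof. intros eps He; exists 1; split; [lra|]; intros; rewrite Rminus_diag, Rabs_R0; lra. Qed.

Lemma dist3_bounds x y z x' y' z' :
  Rabs (x' - x) <= dist3 x' y' z' x y z /\ Rabs (y' - y) <= dist3 x' y' z' x y z /\
  Rabs (z' - z) <= dist3 x' y' z' x y z.
Proof.
  unfold dist3; pose proof (Rabs_pos (x'-x)); pose proof (Rabs_pos (y'-y));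
  pose proof (Rabs_pos (z'-z)); lra.
Qed.

Lemma cont3_x x y z : cont3 (fun a _ _ => a) x y z.
Proof. intros eps He; exists eps; split; auto; intros; pose proof (dist3_bounds x y z x' y' z'); lra. Qed.
Lemma cont3_y x y z : cont3 (fun _ a _ => a) x y z.
Proof. intros eps He; exists eps; split; auto; intros; pose proof (dist3_bounds x y z x' y' z'); lra. Qed.
Lemma cont3_z x y z : cont3 (fun _ _ a => a) x y z.
Proof. intros eps He; exists eps; split; auto; intros; pose proof (dist3_bounds x y z x' y' z'); lra. Qed.

Lemma cont3_plus f g x y z : cont3 f x y z -> cont3 g x y z ->
  cont3 (fun a b c => f a b c + g a b c) x y z.
Proof.
  intros Hf Hg eps He.
  destruct (Hf (eps/2) ltac:(lra)) as [d1 [Hd1 H1]].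
  destruct (Hg (eps/2) ltac:(lra)) as [d2 [Hd2 H2]].
  exists (Rmin d1 d2); split; [apply Rmin_pos; auto|].
  intros x' y' z' Hd.
  pose proof (Rmin_l d1 d2); pose proof (Rmin_r d1 d2).
  specialize (H1 x' y' z' ltac:(lra)); specialize (H2 x' y' z' ltac:(lra)).
  replace (f x' y' z' + g x' y' z' - (f x y z + g x y z)) with
    ((f x' y' z' - f x y z) + (g x' y' z' - g x y z)) by ring.
  eapply Rle_lt_trans; [apply Rabs_triang|]; lra.
Qed.

Lemma cont3_comp h f x y z : continuity_pt h (f x y z) -> cont3 f x y z ->
  cont3 (fun a b c => h (f a b c)) x y z.
Proof.
  intros Hh Hf eps He.
  destruct (Hh eps He) as [al [Hal Hal2]].
  destruct (Hf al Hal) as [dl [Hdl H1]].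
  exists dl; split; auto; intros x' y' z' Hd.
  specialize (H1 x' y' z' Hd).
  destruct (Req_dec (f x' y' z') (f x y z)) as [E|E].
  - rewrite E, Rminus_diag, Rabs_R0; auto.
  - apply (Hal2 (f x' y' z')); split; [split; [exact I| auto]|exact H1].
Qed.

Lemma cont3_ext f g x y z : (forall a b c, f a b c = g a b c) -> cont3 f x y z -> cont3 g x y z.
Proof.
  intros E H eps He; destruct (H eps He) as [dl [Hd H1]]; exists dl; split; auto.
  intros; rewrite <- !E; auto.
Qed.

Lemma cont_sq c u : continuity_pt (fun t => c * (t * t)) u.
Proof.
  apply continuity_pt_mult; [apply continuity_pt_const; intros ? ?; reflexivity|].
  apply continuity_pt_mult; apply derivable_continuous_pt, derivable_pt_id.
Qed.

Lemma cont3_mult f g x y z : cont3 f x y z -> cont3 g x y z ->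
  cont3 (fun a b c => f a b c * g a b c) x y z.
Proof.
  intros Hf Hg.
  assert (Hng : cont3 (fun a b c => (-1) * g a b c) x y z).
  { apply (cont3_comp (fun t => -1 * t)); auto.
    apply continuity_pt_mult; [apply continuity_pt_const; intros ? ?; reflexivity|].
    apply derivable_continuous_pt, derivable_pt_id. }
  pose proof (cont3_plus _ _ _ _ _ Hf Hg) as Hs.
  pose proof (cont3_plus _ _ _ _ _ Hf Hng) as Hd.
  pose proof (cont3_comp _ _ _ _ _ (cont_sq (/4) _) Hs) as Hs2.
  pose proof (cont3_comp _ _ _ _ _ (cont_sq (-/4) _) Hd) as Hd2.
  eapply cont3_ext; [|apply (cont3_plus _ _ _ _ _ Hs2 Hd2)].
  intros; simpl; field.
Qed.

Lemma eval_cont e x y z : ok e x y z -> cont3 (eval e) x y z.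
Proof.
  induction e; simpl; intros H.
  - apply cont3_const.
  - apply cont3_x.
  - apply cont3_y.
  - apply cont3_z.
  - apply cont3_plus; tauto.
  - apply cont3_mult; tauto.
  - apply (cont3_comp sqrt (eval e)); [apply sqrt_continuity_pt; tauto| tauto].
  - apply (cont3_comp Rinv (eval e)); [|tauto].
    apply (continuity_pt_inv id); [apply derivable_continuous_pt, derivable_pt_id|unfold id; tauto].
Qed.

Lemma Ck_eval k : forall e, (forall x y z, pos3 x y z -> ok e x y z) ->
  Ck_pos3 k (eval e).
Proof.
  assert (C : forall e, (forall x y z, pos3 x y z -> ok e x y z) -> continuous_on_pos3 (eval e)).
  { intros e H x y z Hp eps He; destruct (eval_cont e x y z (H _ _ _ Hp) eps He) as [dl [Hd H1]].
    exists dl; split; auto. }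
  induction k; intros e H; simpl.
  - apply C; auto.
  - split; [apply C; auto|].
    exists (eval (d V1 e)), (eval (d V2 e)), (eval (d V3 e)); split.
    + intros x y z Hp; repeat split.
      * exact (d_correct V1 e x y z (H _ _ _ Hp)).
      * exact (d_correct V2 e x y z (H _ _ _ Hp)).
      * exact (d_correct V3 e x y z (H _ _ _ Hp)).
    + repeat split; apply IHk; intros; apply ok_d; auto.
Qed.

Lemma smooth_ext g e : (forall x y z, g x y z = eval e x y z) ->
  (forall x y z, pos3 x y z -> ok e x y z) -> smooth_pos3 g.
Proof.
  intros E H k.
  replace g with (eval e) by (extensionality a; extensionality b; extensionality c; auto).
  apply Ck_eval; auto.
Qed.

Definition Qf (I a b : R) := a*a + b*b + 2*I*a*b.

Lemma dQ I a b a' b' : Qf I a' b' - Qf I a b = (a'-a)*(a'+a+2*I*b') + (b'-b)*(b'+b+2*I*a).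
Proof. unfold Qf; ring. Qed.

Lemma Rabs_le_inv' x e : Rabs x <= e -> -e <= x <= e.
Proof. intros H; split; [pose proof (Rabs_Ropp x); pose proof (Rle_abs (-x)) | pose proof (Rle_abs x)]; lra. Qed.

Lemma core I1 I2 I3 a b c a' b' c' e :
  0 <= I1 -> 0 <= I2 -> 0 <= I3 -> 0 < a -> 0 < b -> 0 < c -> 0 < a' -> 0 < b' -> 0 < c' ->
  0 <= e -> e <= 1 ->
  Rabs (Qf I1 a' b' - Qf I1 a b) <= e ->
  Rabs (Qf I2 b' c' - Qf I2 b c) <= e ->
  Rabs (Qf I3 c' a' - Qf I3 c a) <= e ->
  Rabs (a' - a) * a <= e * (1 + (2*b + /b + 2*I1*a) / b).
Proof.
  intros H1 H2 H3 Ha Hb Hc Ha' Hb' Hc' He0 He1 Q1 Q2 Q3.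
  rewrite dQ in Q1, Q2, Q3.
  apply Rabs_le_inv' in Q1; apply Rabs_le_inv' in Q2; apply Rabs_le_inv' in Q3.
  assert (Hib : 0 < /b) by (apply Rinv_0_lt_compat; lra).
  assert (Hbb : b * /b = 1) by (field; lra).
  set (K := (2*b + /b + 2*I1*a) / b).
  assert (HK : 0 <= K) by (unfold K; apply Rmult_le_pos; nra).
  destruct (Rle_or_lt (Rabs (a'-a) * a) e) as [Hs|Hs].
  { assert (0 <= e*K) by (apply Rmult_le_pos; lra). lra. }
  destruct (Rle_or_lt 0 (a'-a)) as [Hp|Hn].
  - rewrite Rabs_right in Hs |- * by lra.
    assert (T1 : (a'-a)*(a'+a+2*I3*c) >= (a'-a)*a) by (assert (0 <= (a'-a)*(a'+2*I3*c)) by (apply Rmult_le_pos; nra); nra).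
    assert (T2 : (a'-a)*(a'+a+2*I1*b') >= (a'-a)*a) by (assert (0 <= (a'-a)*(a'+2*I1*b')) by (apply Rmult_le_pos; nra); nra).
    assert (Sb : b'-b < 0) by (destruct (Rlt_or_le (b'-b) 0) as [?|G]; [auto| assert (0 <= (b'-b)*(b'+b+2*I1*a)) by (apply Rmult_le_pos; nra); lra]).
    assert (Sc : c'-c < 0) by (destruct (Rlt_or_le (c'-c) 0) as [?|G]; [auto| assert (0 <= (c'-c)*(c'+c+2*I3*a')) by (apply Rmult_le_pos; nra); lra]).
    assert (T3 : (b'-b)*(b'+b+2*I2*c') <= (b'-b)*b) by (assert (0 <= (b-b')*(b'+2*I2*c')) by (apply Rmult_le_pos; nra); nra).
    assert (T4 : (c'-c)*(c'+c+2*I2*b) <= 0) by (assert (0 <= (c-c')*(c'+c+2*I2*b)) by (apply Rmult_le_pos; nra); nra).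
    assert (U : (b-b')*b <= e) by lra.
    assert (U2 : (b-b') <= e * /b).
    { apply (Rmult_le_reg_r b); [lra|]. rewrite Rmult_assoc, Rinv_l by lra. lra. }
    assert (V : (b-b')*(b'+b+2*I1*a) <= e * /b * (2*b + 2*I1*a)).
    { apply Rle_trans with ((b-b')*(2*b+2*I1*a)); [nra|]. apply Rmult_le_compat_r; nra. }
    unfold K; unfold Rdiv. nra.
  - rewrite Rabs_left in Hs |- * by lra.
    assert (T1 : (a'-a)*(a'+a+2*I3*c) <= (a'-a)*a) by (assert (0 <= (a-a')*(a'+2*I3*c)) by (apply Rmult_le_pos; nra); nra).
    assert (T2 : (a'-a)*(a'+a+2*I1*b') <= (a'-a)*a) by (assert (0 <= (a-a')*(a'+2*I1*b')) by (apply Rmult_le_pos; nra); nra).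
    assert (Sb : b'-b > 0) by (destruct (Rlt_or_le 0 (b'-b)) as [?|G]; [auto| assert (0 <= (b-b')*(b'+b+2*I1*a)) by (apply Rmult_le_pos; nra); lra]).
    assert (Sc : c'-c > 0) by (destruct (Rlt_or_le 0 (c'-c)) as [?|G]; [auto| assert (0 <= (c-c')*(c'+c+2*I3*a')) by (apply Rmult_le_pos; nra); lra]).
    assert (T3 : (b'-b)*(b'+b+2*I2*c') >= (b'-b)*b) by (assert (0 <= (b'-b)*(b'+2*I2*c')) by (apply Rmult_le_pos; nra); nra).
    assert (T4 : (c'-c)*(c'+c+2*I2*b) >= 0) by (assert (0 <= (c'-c)*(c'+c+2*I2*b)) by (apply Rmult_le_pos; nra); nra).
    assert (U : (b'-b)*b <= e) by lra.
    assert (U2 : (b'-b) <= e * /b).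
    { apply (Rmult_le_reg_r b); [lra|]. rewrite Rmult_assoc, Rinv_l by lra. lra. }
    assert (U3 : e * / b <= /b) by nra.
    assert (V : (b'-b)*(b'+b+2*I1*a) <= e * /b * (2*b + /b + 2*I1*a)).
    { replace (b'+b+2*I1*a) with (2*b + (b'-b) + 2*I1*a) by ring.
      apply Rle_trans with (e * /b *(2*b+(b'-b)+2*I1*a)); [apply Rmult_le_compat_r; nra|].
      apply Rmult_le_compat_l; nra. }
    unfold K; unfold Rdiv. nra.
Qed.


Lemma l_edge_Q I a b : l_edge I a b = sqrt (Qf I a b).
Proof. unfold l_edge, Qf; f_equal; ring. Qed.

Lemma Q_pos I a b : 0 <= I -> 0 < a -> 0 < b -> 0 < Qf I a b.
Proof. intros; unfold Qf. assert (0 <= I*a*b) by (apply Rmult_le_pos; [apply Rmult_le_pos|]; lra). nra. Qed.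

Lemma l_pos I a b : 0 <= I -> 0 < a -> 0 < b -> 0 < l_edge I a b.
Proof. intros; rewrite l_edge_Q; apply sqrt_lt_R0, Q_pos; auto. Qed.

Lemma l_sq I a b : 0 <= I -> 0 < a -> 0 < b -> l_edge I a b * l_edge I a b = Qf I a b.
Proof. intros; rewrite l_edge_Q; apply sqrt_sqrt; left; apply Q_pos; auto. Qed.

Definition Eex (I : R) (u v : ex) : ex :=
  Sq (Add (Add (Mul u u) (Mul v v)) (Mul (Mul (Cst (2*I)) u) v)).

Lemma Eex_eval1 I x y z : l_edge I x y = eval (Eex I Vx Vy) x y z.
Proof. rewrite l_edge_Q; simpl; unfold Qf; f_equal; ring. Qed.
Lemma Eex_eval2 I x y z : l_edge I y z = eval (Eex I Vy Vz) x y z.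
Proof. rewrite l_edge_Q; simpl; unfold Qf; f_equal; ring. Qed.
Lemma Eex_eval3 I x y z : l_edge I z x = eval (Eex I Vz Vx) x y z.
Proof. rewrite l_edge_Q; simpl; unfold Qf; f_equal; ring. Qed.

Lemma Eex_ok I u v x y z : 0 <= I -> ok u x y z -> ok v x y z ->
  0 < eval u x y z -> 0 < eval v x y z -> ok (Eex I u v) x y z.
Proof.
  intros HI Hu Hv H0 H1; simpl; repeat split; auto.
  pose proof (Q_pos I _ _ HI H0 H1); unfold Qf in *; lra.
Qed.

Lemma dl1 J a b : 0 <= J -> 0 < a -> 0 < b ->
  derivable_pt_lim (fun t => l_edge J t b) a ((a + J*b) / l_edge J a b).
Proof.
  intros HI Ha Hb.
  pose proof (d_correct V1 (Eex J Vx Vy) a b 0 (Eex_ok J Vx Vy a b 0 HI I I Ha Hb)) as K.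
  simpl in K.
  replace (fun t => l_edge J t b) with (fun t => sqrt (t * t + b * b + 2 * J * t * b))
    by (extensionality t; rewrite l_edge_Q; unfold Qf; reflexivity).
  match type of K with derivable_pt_lim _ _ ?l => replace ((a + J*b) / l_edge J a b) with l end.
  - exact K.
  - rewrite l_edge_Q; unfold Qf. pose proof (l_pos J a b HI Ha Hb) as P; rewrite l_edge_Q in P; unfold Qf in P.
    field; lra.
Qed.

Lemma dl2 J a b : 0 <= J -> 0 < a -> 0 < b ->
  derivable_pt_lim (fun t => l_edge J a t) b ((b + J*a) / l_edge J a b).
Proof.
  intros HI Ha Hb.
  replace (fun t => l_edge J a t) with (fun t => l_edge J t a)
    by (extensionality t; rewrite !l_edge_Q; unfold Qf; f_equal; ring).
  replace (l_edge J a b) with (l_edge J b a) by (rewrite !l_edge_Q; unfold Qf; f_equal; ring).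
  apply dl1; auto.
Qed.

Lemma sq_diff s s' dl : 0 <= s -> 0 <= s' -> dl <= 1 -> Rabs (s' - s) < dl ->
  Rabs (s'*s' - s*s) <= dl * (2*s + 1).
Proof.
  intros H1 H2 H3 H4.
  replace (s'*s' - s*s) with ((s'-s)*(s'+s)) by ring.
  rewrite Rabs_mult, (Rabs_right (s'+s)) by lra.
  pose proof (Rabs_pos (s'-s)).
  assert (s' - s <= Rabs (s'-s)) by apply Rle_abs.
  assert (s' + s <= 2*s + 1) by lra.
  apply Rle_trans with (Rabs (s'-s) * (2*s+1)); [apply Rmult_le_compat_l; lra|].
  apply Rmult_le_compat_r; lra.
Qed.

Lemma comp1_eq Iij Ijk Iki x y z : comp1 (rhoE Iij Ijk Iki) x y z = l_edge Iij x y.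
Proof. reflexivity. Qed.
Lemma comp2_eq Iij Ijk Iki x y z : comp2 (rhoE Iij Ijk Iki) x y z = l_edge Ijk y z.
Proof. reflexivity. Qed.
Lemma comp3_eq Iij Ijk Iki x y z : comp3 (rhoE Iij Ijk Iki) x y z = l_edge Iki z x.
Proof. reflexivity. Qed.

Definition Cc (J a b : R) := (1 + (2*b + /b + 2*J*a) / b) / a.

Lemma core' J1 J2 J3 a b c a' b' c' e :
  0 <= J1 -> 0 <= J2 -> 0 <= J3 -> 0 < a -> 0 < b -> 0 < c -> 0 < a' -> 0 < b' -> 0 < c' ->
  0 <= e -> e <= 1 ->
  Rabs (Qf J1 a' b' - Qf J1 a b) <= e ->
  Rabs (Qf J2 b' c' - Qf J2 b c) <= e ->
  Rabs (Qf J3 c' a' - Qf J3 c a) <= e ->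
  Rabs (a' - a) <= e * Cc J1 a b.
Proof.
  intros. pose proof (core J1 J2 J3 a b c a' b' c' e) as K.
  set (N := 1 + (2*b + /b + 2*J1*a) / b).
  replace (e * Cc J1 a b) with ((e*N)*/a) by (unfold Cc, N; field; lra).
  apply (Rmult_le_reg_r a); [auto|].
  replace ((e*N)*/a*a) with (e*N) by (field; lra).
  apply K; auto.
Qed.

Lemma Cc_pos J a b : 0 <= J -> 0 < a -> 0 < b -> 0 < Cc J a b.
Proof.
  intros. unfold Cc. apply Rdiv_lt_0_compat; auto.
  assert (0 < /b) by (apply Rinv_0_lt_compat; auto).
  assert (0 <= (2*b + /b + 2*J*a)/b) by (apply Rmult_le_pos; nra). lra.
Qed.

Lemma Qeq_inj Iij Ijk Iki x y z x' y' z' :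
  0 <= Iij -> 0 <= Ijk -> 0 <= Iki -> pos3 x y z -> pos3 x' y' z' ->
  (forall e, 0 <= e -> e <= 1 ->
    Rabs (Qf Iij x' y' - Qf Iij x y) <= e ->
    Rabs (Qf Ijk y' z' - Qf Ijk y z) <= e ->
    Rabs (Qf Iki z' x' - Qf Iki z x) <= e ->
    dist3 x' y' z' x y z <= e * (Cc Iij x y + Cc Ijk y z + Cc Iki z x)).
Proof.
  intros H1 H2 H3 [Hx [Hy Hz]] [Hx' [Hy' Hz']] e He0 He1 Q1 Q2 Q3.
  unfold dist3.
  pose proof (core' Iij Ijk Iki x y z x' y' z' e H1 H2 H3 Hx Hy Hz Hx' Hy' Hz' He0 He1 Q1 Q2 Q3).
  pose proof (core' Ijk Iki Iij y z x y' z' x' e H2 H3 H1 Hy Hz Hx Hy' Hz' Hx' He0 He1 Q2 Q3 Q1).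
  pose proof (core' Iki Iij Ijk z x y z' x' y' e H3 H1 H2 Hz Hx Hy Hz' Hx' Hy' He0 He1 Q3 Q1 Q2).
  lra.
Qed.

Lemma inj_part Iij Ijk Iki : 0 <= Iij -> 0 <= Ijk -> 0 <= Iki -> injective_pos3 (rhoE Iij Ijk Iki).
Proof.
  intros H1 H2 H3 x y z x' y' z' Hp Hp' E.
  unfold rhoE in E. injection E as E1 E2 E3.
  destruct Hp as [Hx [Hy Hz]]; destruct Hp' as [Hx' [Hy' Hz']].
  assert (Q1 : Qf Iij x y = Qf Iij x' y') by (rewrite <- !l_sq by auto; rewrite E1; reflexivity).
  assert (Q2 : Qf Ijk y z = Qf Ijk y' z') by (rewrite <- !l_sq by auto; rewrite E2; reflexivity).
  assert (Q3 : Qf Iki z x = Qf Iki z' x') by (rewrite <- !l_sq by auto; rewrite E3; reflexivity).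
  pose proof (Qeq_inj Iij Ijk Iki x y z x' y' z' H1 H2 H3 (conj Hx (conj Hy Hz)) (conj Hx' (conj Hy' Hz')) 0
    ltac:(lra) ltac:(lra)) as D.
  rewrite Q1, Q2, Q3, !Rminus_diag, Rabs_R0, Rmult_0_l in D.
  specialize (D ltac:(lra) ltac:(lra) ltac:(lra)).
  pose proof (dist3_bounds x y z x' y' z') as [B1 [B2 B3]].
  pose proof (Rabs_pos (x'-x)); pose proof (Rabs_pos (y'-y)); pose proof (Rabs_pos (z'-z)).
  assert (A1 : Rabs (x'-x) = 0) by lra. assert (A2 : Rabs (y'-y) = 0) by lra.
  assert (A3 : Rabs (z'-z) = 0) by lra.
  assert (x'-x = 0) by (destruct (Req_dec (x'-x) 0); auto; exfalso; apply (Rabs_no_R0 (x'-x)); auto).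
  assert (y'-y = 0) by (destruct (Req_dec (y'-y) 0); auto; exfalso; apply (Rabs_no_R0 (y'-y)); auto).
  assert (z'-z = 0) by (destruct (Req_dec (z'-z) 0); auto; exfalso; apply (Rabs_no_R0 (z'-z)); auto).
  lra.
Qed.

Lemma invc_part Iij Ijk Iki : 0 <= Iij -> 0 <= Ijk -> 0 <= Iki -> inverse_continuous_pos3 (rhoE Iij Ijk Iki).
Proof.
  intros H1 H2 H3 x y z Hp eps He.
  pose proof Hp as [Hx [Hy Hz]].
  set (L1 := l_edge Iij x y). set (L2 := l_edge Ijk y z). set (L3 := l_edge Iki z x).
  assert (P1 : 0 < L1) by (apply l_pos; auto).
  assert (P2 : 0 < L2) by (apply l_pos; auto).
  assert (P3 : 0 < L3) by (apply l_pos; auto).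
  set (KQ := 2*(L1+L2+L3)+1).
  set (Ct := Cc Iij x y + Cc Ijk y z + Cc Iki z x).
  assert (HC : 0 < Ct) by (unfold Ct; pose proof (Cc_pos Iij x y); pose proof (Cc_pos Ijk y z);
     pose proof (Cc_pos Iki z x); assert (0 < Cc Iij x y) by auto; assert (0 < Cc Ijk y z) by auto;
     assert (0 < Cc Iki z x) by auto; lra).
  assert (HKQ : 1 <= KQ) by (unfold KQ; lra).
  set (dl := Rmin (/KQ) (eps/(KQ*Ct+1))).
  assert (Hd1 : dl <= /KQ) by apply Rmin_l.
  assert (Hd2 : dl <= eps/(KQ*Ct+1)) by apply Rmin_r.
  assert (Hdp : 0 < dl).
  { apply Rmin_pos; [apply Rinv_0_lt_compat; lra|]. apply Rdiv_lt_0_compat; auto.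
    assert (0 < KQ*Ct) by (apply Rmult_lt_0_compat; lra). lra. }
  assert (HdK : dl * KQ <= 1).
  { replace 1 with (/KQ * KQ) by (field; lra). apply Rmult_le_compat_r; lra. }
  assert (Hdle1 : dl <= 1) by nra.
  exists dl; split; auto.
  intros x' y' z' Hp' D.
  pose proof Hp' as [Hx' [Hy' Hz']].
  rewrite !comp1_eq, !comp2_eq, !comp3_eq in D. fold L1 L2 L3 in D.
  pose proof (dist3_bounds L1 L2 L3 (l_edge Iij x' y') (l_edge Ijk y' z') (l_edge Iki z' x')) as [B1 [B2 B3]].
  assert (S1 := sq_diff L1 (l_edge Iij x' y') dl ltac:(lra) ltac:(left; apply l_pos; auto) Hdle1 ltac:(lra)).
  assert (S2 := sq_diff L2 (l_edge Ijk y' z') dl ltac:(lra) ltac:(left; apply l_pos; auto) Hdle1 ltac:(lra)).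
  assert (S3 := sq_diff L3 (l_edge Iki z' x') dl ltac:(lra) ltac:(left; apply l_pos; auto) Hdle1 ltac:(lra)).
  unfold L1, L2, L3 in S1, S2, S3. rewrite !l_sq in S1, S2, S3 by auto.
  fold L1 L2 L3 in S1, S2, S3.
  assert (E1 : dl * (2*L1+1) <= dl * KQ) by (apply Rmult_le_compat_l; unfold KQ; lra).
  assert (E2 : dl * (2*L2+1) <= dl * KQ) by (apply Rmult_le_compat_l; unfold KQ; lra).
  assert (E3 : dl * (2*L3+1) <= dl * KQ) by (apply Rmult_le_compat_l; unfold KQ; lra).
  pose proof (Qeq_inj Iij Ijk Iki x y z x' y' z' H1 H2 H3 Hp Hp' (dl*KQ)
    ltac:(nra) HdK ltac:(lra) ltac:(lra) ltac:(lra)) as F.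
  fold Ct in F.
  assert (G : dl * (KQ*Ct+1) <= eps).
  { apply Rle_trans with (eps/(KQ*Ct+1) * (KQ*Ct+1)).
    - apply Rmult_le_compat_r; [nra|lra].
    - right; field. nra. }
  nra.
Qed.

Theorem mainTheorem2 (Iij Ijk Iki : R) :
  0 <= Iij -> 0 <= Ijk -> 0 <= Iki ->
  smooth_embedding_pos3 (rhoE Iij Ijk Iki) /\
  (forall lij ljk lki : R, 0 < lij -> 0 < ljk -> 0 < lki ->
   forall ri rj rk ri' rj' rk' : R,
     pos3 ri rj rk -> pos3 ri' rj' rk' ->
     rhoE Iij Ijk Iki ri rj rk = (lij, ljk, lki) ->
     rhoE Iij Ijk Iki ri' rj' rk' = (lij, ljk, lki) ->
     ri = ri' /\ rj = rj' /\ rk = rk').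
Proof.
  intros H1 H2 H3.
  assert (Inj := inj_part Iij Ijk Iki H1 H2 H3).
  split.
  - split; [|split; [|split; [|split; [|split; [|split]]]]].
    + intros x y z [Hx [Hy Hz]]; rewrite comp1_eq, comp2_eq, comp3_eq.
      repeat split; apply l_pos; auto.
    + apply (smooth_ext _ (Eex Iij Vx Vy)); [intros; apply Eex_eval1|].
      intros x y z [Hx [Hy Hz]]; apply Eex_ok; simpl; auto.
    + apply (smooth_ext _ (Eex Ijk Vy Vz)); [intros; apply Eex_eval2|].
      intros x y z [Hx [Hy Hz]]; apply Eex_ok; simpl; auto.
    + apply (smooth_ext _ (Eex Iki Vz Vx)); [intros; apply Eex_eval3|].
      intros x y z [Hx [Hy Hz]]; apply Eex_ok; simpl; auto.
    + exists (fun x y z => (x + Iij*y) / l_edge Iij x y),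
             (fun x y z => (y + Iij*x) / l_edge Iij x y),
             (fun _ _ _ => 0),
             (fun _ _ _ => 0),
             (fun x y z => (y + Ijk*z) / l_edge Ijk y z),
             (fun x y z => (z + Ijk*y) / l_edge Ijk y z),
             (fun x y z => (x + Iki*z) / l_edge Iki z x),
             (fun _ _ _ => 0),
             (fun x y z => (z + Iki*x) / l_edge Iki z x).
      split; [|split; [|split]].
      * intros x y z [Hx [Hy Hz]]; repeat split.
        -- apply (dl1 Iij x y); auto.
        -- apply (dl2 Iij x y); auto.
        -- apply (derivable_pt_lim_const (l_edge Iij x y)).
      * intros x y z [Hx [Hy Hz]]; repeat split.
        -- apply (derivable_pt_lim_const (l_edge Ijk y z)).
        -- apply (dl1 Ijk y z); auto.
        -- apply (dl2 Ijk y z); auto.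
      * intros x y z [Hx [Hy Hz]]; repeat split.
        -- apply (dl2 Iki z x); auto.
        -- apply (derivable_pt_lim_const (l_edge Iki z x)).
        -- apply (dl1 Iki z x); auto.
      * intros x y z [Hx [Hy Hz]].
        assert (P1 := l_pos Iij x y H1 Hx Hy).
        assert (P2 := l_pos Ijk y z H2 Hy Hz).
        assert (P3 := l_pos Iki z x H3 Hz Hx).
        assert (A1 : 0 < (x + Iij*y) / l_edge Iij x y) by (apply Rdiv_lt_0_compat; nra).
        assert (A2 : 0 < (y + Iij*x) / l_edge Iij x y) by (apply Rdiv_lt_0_compat; nra).
        assert (A3 : 0 < (y + Ijk*z) / l_edge Ijk y z) by (apply Rdiv_lt_0_compat; nra).
        assert (A4 : 0 < (z + Ijk*y) / l_edge Ijk y z) by (apply Rdiv_lt_0_compat; nra).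
        assert (A5 : 0 < (x + Iki*z) / l_edge Iki z x) by (apply Rdiv_lt_0_compat; nra).
        assert (A6 : 0 < (z + Iki*x) / l_edge Iki z x) by (apply Rdiv_lt_0_compat; nra).
        unfold det3.
        revert A1 A2 A3 A4 A5 A6.
        generalize ((x + Iij*y) / l_edge Iij x y) ((y + Iij*x) / l_edge Iij x y)
          ((y + Ijk*z) / l_edge Ijk y z) ((z + Ijk*y) / l_edge Ijk y z)
          ((x + Iki*z) / l_edge Iki z x) ((z + Iki*x) / l_edge Iki z x).
        intros u1 u2 u3 u4 u5 u6 A1 A2 A3 A4 A5 A6.
        assert (0 < u1*u3*u6) by (repeat apply Rmult_lt_0_compat; auto).
        assert (0 < u2*u4*u5) by (repeat apply Rmult_lt_0_compat; auto).
        nra.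
    + exact Inj.
    + apply invc_part; auto.
  - intros lij ljk lki _ _ _ ri rj rk ri' rj' rk' Hp Hp' E E'.
    apply Inj; auto. rewrite E, E'; reflexivity.
Qed.
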